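(* Let $q$ be a power of an odd prime $p$, let $a,b$ be distinct positive integers and $n$ a positive integer. The $\mathbb{F}_q$-dimension of the radical of the quadratic form $x\mapsto \mathrm{Tr}_{\mathbb{F}_{q^n}/\mathbb{F}_q}(x^{q^b+1}-x^{q^a+1})$ on $\mathbb{F}_{q^n}$ equals $$\begin{cases}(b+a,n)+(|b-a|,n)-(b+a,|b-a|,n) & \text{if } \nu_p(n)\le \max\{\nu_p(b+a),\nu_p(|b-a|)\},\\ (b+a,n)+(|b-a|,n) & \text{if } \nu_p(n)> \max\{\nu_p(b+a),\nu_p(|b-a|)\}.\end{cases}$$
   Context: $(u,v)$ and $(u,v,w)$ denote greatest common divisors; $\nu_p$ is the $p$-adic valuation. The radical of a quadratic form $F$ over $\mathbb{F}_q$ on $\mathbb{F}_{q^n}$ is $\{x\in\mathbb{F}_{q^n}: F(x+y)-F(x)-F(y)=0\ \forall y\in\mathbb{F}_{q^n}\}$. *)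

(* Defs.v *)
From HB Require Import structures.
From mathcomp Require Import all_boot all_order all_algebra all_fingroup all_solvable all_field.
Set Implicit Arguments. Unset Strict Implicit. Unset Printing Implicit Defensive.
Import Order.TTheory GRing.Theory Num.Theory.
Local Open Scope ring_scope.

(* Tr_{L/F}, via the library's Galois trace: sum over all F-automorphisms of L
   (1%VS is the copy of F inside L, {:L} the whole of L). *)
Definition trLF (F : fieldType) (L : splittingFieldType F) (x : L) : L :=
  galTrace 1%VS fullv x.

Definition Qform (F : fieldType) (L : splittingFieldType F) (q a b : nat) (x : L) : L :=
  trLF (x ^+ (q ^ b + 1) - x ^+ (q ^ a + 1)).

Definition absdiff (m n : nat) : nat := ((m - n) + (n - m))%N.

(* Main.v *)
From HB Require Import structures.
From mathcomp Require Import all_boot all_order all_algebra all_fingroup all_solvable all_field.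
From mathcomp Require Import zify ring.
Require Import Defs.
Set Implicit Arguments. Unset Strict Implicit. Unset Printing Implicit Defensive.
Import GRing.Theory.
Local Open Scope ring_scope.

Section Gal.
Variables (F : finFieldType) (L : splittingFieldType F).
Variable alpha : gal_of (L:=L) fullv.
Hypothesis gen : generator 'Gal({:L} / 1) alpha.

Local Notation n := (\dim {:L}).
Local Notation s m := (alpha ^+ m)%g.

Lemma galE : 'Gal({:L} / 1)%g = <[alpha]>%g.
Proof. exact/eqP. Qed.

Lemma ord_alpha : #[alpha]%g = n.
Proof.
rewrite /order -galE -galois_dim ?finField_galois ?sub1v //.
by rewrite dimv1 divn1.
Qed.

Lemma n_gt0 : (0 < n)%N.
Proof. by rewrite -ord_alpha order_gt0. Qed.

Lemma sM m k x : s (m + k) x = s k (s m x).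
Proof. by rewrite expgD galM ?memvf. Qed.

Lemma sX m k x : ((s m) ^+ k)%g x = s (m * k) x.
Proof. by rewrite expgM. Qed.

Lemma s_n x : s n x = x.
Proof. by rewrite -ord_alpha expg_order gal_id. Qed.

Definition Kf m := fixedField (L:=L) (V:=fullv) <[s m]>%g.

Lemma KfP m x : reflect (s m x = x) (x \in Kf m).
Proof.
apply: (iffP (fixedFieldP (memvf x))) => [H|H g /cycleP[k ->]].
  by apply: H; apply: cycle_id.
elim: k => [|k IH]; first by rewrite expg0 gal_id.
by rewrite expgSr galM ?memvf // IH H.
Qed.

Lemma dimKf m : \dim (Kf m) = gcdn m n.
Proof.
have := dim_fixedField <[s m]>%G.
rewrite /= -orderE orderXgcd ord_alpha -/(Kf m) => H.
have hd : (\dim (Kf m) %| n)%N by apply: field_dimS; apply: subvf.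
have hd0 : (0 < \dim (Kf m))%N by rewrite adim_gt0.
have hg : (gcdn n m %| n)%N by apply: dvdn_gcdl.
have hg0 : (0 < gcdn n m)%N by rewrite gcdn_gt0 n_gt0.
have e1 := divnK hd; have e2 := divnK hg.
rewrite gcdnC; apply/eqP; rewrite -(@eqn_pmul2l (n %/ gcdn n m)).
  by rewrite e2 H e1.
by rewrite divn_gt0 // dvdn_leq // n_gt0.
Qed.


Definition Sop m : 'End(L) := (s m : 'AEnd(L)) : 'End(L).
Definition Aop m : 'End(L) := Sop m - \1%VF.
Definition Top (H : {set gal_of (L:=L) fullv}) : 'End(L) :=
  \sum_(h in H) ((h : 'AEnd(L)) : 'End(L)).

Lemma AopE m x : Aop m x = s m x - x.
Proof. by rewrite /Aop add_lfunE opp_lfunE id_lfunE. Qed.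

Lemma TopE H x : Top H x = \sum_(h in H) h x.
Proof. by rewrite /Top sum_lfunE. Qed.

Lemma lker_Aop m : lker (Aop m) = Kf m.
Proof.
apply/vspaceP => x; rewrite memv_ker AopE subr_eq0.
by apply/eqP/KfP.
Qed.

Lemma dim_ker_img (f : 'End(L)) : (\dim (lker f) + \dim (limg f) = n)%N.
Proof. by have := limg_ker_dim f fullv; rewrite capfv. Qed.

Lemma comm_s m k y : s m (s k y) = s k (s m y).
Proof. by rewrite -!sM addnC. Qed.

Lemma Tfix (H : {group gal_of (L:=L) fullv}) g y :
  g \in H -> g (Top H y) = Top H y.
Proof.
move=> gH; rewrite !TopE rmorph_sum /=.
rewrite [RHS](reindex_inj (mulIg g)) /=.
by apply: eq_big => [h|h _]; rewrite ?groupMr // galM ?memvf.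
Qed.

Lemma Tcomm v m y : s m (Top <[s v]>%g y) = Top <[s v]>%g (s m y).
Proof.
rewrite !TopE rmorph_sum /=; apply: eq_bigr => h /cycleP[j ->].
by rewrite !sX comm_s.
Qed.

Lemma fixT u v y : y \in Kf u -> Top <[s v]>%g y \in (Kf u :&: Kf v)%VS.
Proof.
move=> /KfP yu; rewrite memv_cap; apply/andP; split; apply/KfP.
  by rewrite Tcomm yu.
by rewrite Tfix // cycle_id.
Qed.


Lemma Kf_fix m y g : y \in Kf m -> g \in <[s m]>%g -> g y = y.
Proof. by move=> /mem_fixedFieldP[_ H] /H. Qed.

Variable p : nat.
Hypothesis charp : p \in [pchar L].

Lemma Tzero u v y : (p %| #|<[s u]>%g :&: <[s v]>%g|)%N -> y \in Kf u ->
  Top <[s v]>%g y = 0.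
Proof.
set U := <[s u]>%G; set V := <[s v]>%G; set K := (U :&: V)%G.
move=> pK yu.
rewrite TopE (partition_big (fun h => K :* h)%g predT) //=.
apply: big1 => C _.
case: (pickP [pred h | (h \in V) && ((K :* h)%g == C)]) => [h0 /andP[h0V /eqP <-]|none]; last first.
  by rewrite big_pred0 // => h; apply: none.
have e: forall h, (h \in V) && ((K :* h)%g == (K :* h0)%g) = (h \in (K :* h0)%g).
  move=> h; apply/andP/idP => [[hV /eqP/rcoset_eqP]//|hK].
  split; last by apply/eqP/rcoset_eqP.
  case/rcosetP: hK => k kK ->; rewrite groupM //.
  by move: kK; rewrite inE => /andP[].
rewrite (eq_bigl _ _ e) (eq_bigr (fun _ => h0 y)); last first.
  move=> h /rcosetP[k kK ->]; rewrite galM ?memvf // (Kf_fix (g:=k) yu) //.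
  by move: kK; rewrite inE => /andP[].
rewrite sumr_const card_rcoset -mulr_natl.
by move: pK; rewrite (dvdn_pcharf charp) => /eqP ->; rewrite mul0r.
Qed.


Lemma TTnz u v : ~~ (p %| #|<[s u]>%g :&: <[s v]>%g|)%N ->
  exists y, Top <[s v]>%g (Top <[s u]>%g y) != 0.
Proof.
set U := <[s u]>%G; set V := <[s v]>%G; set K := (U :&: V)%G => npK.
pose S w := [set x : gal_of (L:=L) fullv * gal_of (L:=L) fullv |
               (x.1 \in U) && (x.2 \in V) && (x.1 * x.2 == w)%g].
pose c w : L := #|S w|%:R.
have c1 : c 1%g != 0.
  rewrite /c.
  have -> : S 1%g = (fun k => (k, k^-1))%g @: K.
    apply/setP => x; rewrite inE; apply/idP/imsetP.
      move=> /andP[/andP[x1U x2V] /eqP e].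
      have e2 : x.2 = (x.1^-1)%g by apply/eqP; rewrite eq_sym eq_invg_mul e.
      exists x.1; last by case: x e2 {x1U x2V e} => /= ? ? ->.
      by rewrite inE x1U -[x.1]invgK -e2 groupV.
    case=> k; rewrite inE => /andP[kU kV] -> /=.
    by rewrite kU groupV kV mulgV eqxx.
  rewrite card_imset; last by move=> k1 k2 [].
  by rewrite -(dvdn_pcharf charp).
have [a _ Ha] := @gal_independent_contra _ _ fullv predT c 1%g isT c1.
exists a; rewrite !TopE.
rewrite (eq_bigr (fun h => \sum_(k in U) (k * h)%g a)); last first.
  move=> h _; rewrite rmorph_sum.
  by apply: eq_bigr => k _; rewrite galM ?memvf.
rewrite exchange_big pair_big /=.
rewrite (partition_big (fun x => (x.1 * x.2)%g) predT) //=.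
move: Ha; congr (_ != 0); apply: eq_bigr => w _.
rewrite (eq_bigr (fun _ => w a)); last by move=> x /andP[_ /eqP ->].
by rewrite sumr_const /c mulr_natl; congr (_ *+ _); apply: eq_card => x; rewrite inE.
Qed.


Lemma Timg_sub u v : (Top <[s v]>%g @: Kf u <= Kf u :&: Kf v)%VS.
Proof. by apply/subvP => z /memv_imgP[y yK ->]; apply: fixT. Qed.

Lemma Timg u v : ~~ (p %| #|<[s u]>%g :&: <[s v]>%g|)%N ->
  (Top <[s v]>%g @: Kf u)%VS = (Kf u :&: Kf v)%VS.
Proof.
move=> npK; apply/eqP; rewrite eqEsubv Timg_sub /=.
have [y0 nz] := TTnz npK.
set x0 := Top <[s u]>%g y0; set t := Top <[s v]>%g x0.
have x0u : x0 \in Kf u by apply/KfP; rewrite Tfix // cycle_id.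
have tuv := fixT v x0u.
have /memv_capP[tu tv] := tuv.
apply/subvP => c /memv_capP[cu cv].
apply/memv_imgP; exists (c / t * x0).
  apply/KfP; rewrite rmorphM fmorph_div /=.
  by move/KfP: cu => ->; move/KfP: tu => ->; move/KfP: x0u => ->.
rewrite TopE (eq_bigr (fun h : gal_of (L:=L) fullv => c / t * h x0)); last first.
  move=> h hV; rewrite rmorphM fmorph_div /=.
  by rewrite (Kf_fix (g:=h) cv) // (Kf_fix (g:=h) tv).
by rewrite -mulr_sumr -TopE -/t divfK.
Qed.


Lemma Kf_mul m j x : x \in Kf m -> x \in Kf (m * j).
Proof.
move/KfP => H; apply/KfP; elim: j => [|j IH]; first by rewrite muln0 expg0 gal_id.
by rewrite mulnS sM H.
Qed.

Lemma Kf_gcd u v : (0 < u)%N -> (Kf u :&: Kf v)%VS = Kf (gcdn u v).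
Proof.
move=> u0; apply/vspaceP => x; rewrite memv_cap; apply/andP/idP.
  case=> xu xv; have [a _ /dvdnP[k e]] := Bezoutl v u0.
  have h1 : x \in Kf (u * k) by apply: Kf_mul.
  have h2 : x \in Kf (v * a) by apply: Kf_mul.
  apply/KfP; move/KfP: h2 => h2; move/KfP: h1.
  by rewrite mulnC -e mulnC sM comm_s h2.
move=> xg; split.
  by rewrite -(divnK (dvdn_gcdl u v)) mulnC; apply: Kf_mul.
by rewrite -(divnK (dvdn_gcdr u v)) mulnC; apply: Kf_mul.
Qed.

Lemma Kf_n : Kf n = fullv.
Proof. by apply/vspaceP => x; rewrite memvf; apply/KfP; rewrite s_n. Qed.

Lemma dim_limgT v : \dim (limg (Top <[s v]>%g)) = gcdn v n.
Proof.
have np : ~~ (p %| #|<[s n]>%g :&: <[s v]>%g|)%N.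
  rewrite -ord_alpha expg_order cycle1 (setIidPl (sub1G _)) cards1.
  by rewrite dvdn1; apply/eqP => p1; move: (pcharf_prime charp); rewrite p1.
have := Timg np; rewrite Kf_n capfv => ->.
by rewrite dimKf.
Qed.

Lemma H90 v : limg (Aop v) = lker (Top <[s v]>%g).
Proof.
apply/eqP; rewrite eqEdim; apply/andP; split.
  apply/subvP => z /memv_imgP[y _ ->]; rewrite memv_ker AopE raddfB /=.
  by rewrite -Tcomm Tfix ?cycle_id // subrr.
have e1 := dim_ker_img (Aop v); have e2 := dim_ker_img (Top <[s v]>%g).
rewrite lker_Aop dimKf in e1; rewrite dim_limgT in e2.
by rewrite -(leq_add2l (gcdn v n)) e1 addnC e2.
Qed.


Lemma dim_main u v : (0 < u)%N ->
  \dim (lker (Aop u \o Aop v)%VF) =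
  (gcdn u n + gcdn v n -
   (if (p %| #|<[s u]>%g :&: <[s v]>%g|)%N then 0 else gcdn (gcdn u v) n))%N.
Proof.
move=> u0.
have e1 := dim_ker_img (Aop u \o Aop v)%VF.
rewrite limg_comp in e1.
have e3 := limg_ker_dim (Aop u) (limg (Aop v)).
have e4 := dim_ker_img (Aop v).
rewrite lker_Aop dimKf in e4.
have link : (limg (Aop v) :&: lker (Aop u))%VS = (Kf u :&: lker (Top <[s v]>%g))%VS.
  by rewrite H90 lker_Aop capvC.
rewrite link in e3.
have e5 := limg_ker_dim (Top <[s v]>%g) (Kf u).
rewrite dimKf in e5.
have e6 : \dim (Top <[s v]>%g @: Kf u)%VS =
   (if (p %| #|<[s u]>%g :&: <[s v]>%g|)%N then 0 else gcdn (gcdn u v) n)%N.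
  case: ifP => pK.
    apply/eqP; rewrite dimv_eq0 -subv0; apply/subvP => z /memv_imgP[y yu ->].
    by rewrite (Tzero (u:=u)) // memv0.
  by rewrite Timg ?pK // Kf_gcd // dimKf.
rewrite e6 in e5.
move: e1 e3 e4 e5.
set X := \dim (lker _); set Y := \dim (_ :&: _).
set Z := \dim (Aop u @: _)%VS; set W := \dim (limg (Aop v)).
set c := (if _ then _ else _).
lia.
Qed.


Lemma card_cyc m : #|<[s m]>%g| = (n %/ gcdn n m)%N.
Proof. by rewrite -orderE orderXgcd ord_alpha. Qed.

Lemma p_dvd_cyc m : (0 < m)%N -> (p %| #|<[s m]>%g|)%N = (logn p m < logn p n)%N.
Proof.
move=> m0; have pp := pcharf_prime charp.
have n0 := n_gt0.
have gd : (gcdn n m %| n)%N by apply: dvdn_gcdl.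
have q0 : (0 < n %/ gcdn n m)%N by rewrite divn_gt0 ?gcdn_gt0 ?n0 // dvdn_leq.
rewrite card_cyc.
have -> : (p %| n %/ gcdn n m)%N = (0 < logn p (n %/ gcdn n m))%N.
  by rewrite logn_gt0 mem_primes pp q0.
rewrite logn_div // logn_gcd //.
lia.
Qed.

Lemma pK_cond u v : (0 < u)%N -> (0 < v)%N ->
  (p %| #|<[s u]>%g :&: <[s v]>%g|)%N =
  ~~ (logn p n <= maxn (logn p u) (logn p v))%N.
Proof.
move=> u0 v0; have pp := pcharf_prime charp.
have -> : (p %| #|<[s u]>%g :&: <[s v]>%g|)%N =
          (p %| #|<[s u]>%g|)%N && (p %| #|<[s v]>%g|)%N.
  apply/idP/andP => [h|[hu hv]].
    split; apply: dvdn_trans h _; apply: cardSg; [apply: subsetIl | apply: subsetIr].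
  have [x xU ox] := Cauchy pp hu.
  have [y yV oy] := Cauchy pp hv.
  have sub : forall m z, z \in <[s m]>%g -> <[z]>%g \subset <[alpha]>%g.
    move=> m z zm; rewrite cycle_subG; apply: subsetP zm.
    by rewrite cycle_subG mem_cycle.
  have /eqP exy : (<[x]>%g == <[y]>%g :> {set _}).
    rewrite (@eq_subG_cyclic _ <[alpha]>%G <[x]>%G <[y]>%G (cycle_cyclic alpha)) ?(sub u x) ?(sub v y) //=.
    by change (#[x] == #[y])%g; rewrite ox oy.
  have xV : x \in <[s v]>%g.
    have : x \in <[y]>%g by rewrite -exy cycle_id.
    by apply: subsetP; rewrite cycle_subG.
  rewrite -ox; apply: order_dvdG; by rewrite inE xU xV.
rewrite !p_dvd_cyc //.
apply/andP/idP => [[h1 h2]|h]; first by rewrite -ltnNge gtn_max h1.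
by move: h; rewrite -ltnNge gtn_max => /andP.
Qed.


Hypothesis alphaE : forall x, alpha x = x ^+ #|F|.
Local Notation tr := (@trLF F L).
Local Notation Qf := (@Qform F L).

Lemma sE m x : s m x = x ^+ (#|F| ^ m).
Proof.
elim: m => [|m IH]; first by rewrite expg0 gal_id expn0 expr1.
by rewrite -addn1 sM expg1 alphaE IH -exprM expnD expn1.
Qed.

Lemma tr_s m z : tr (s m z) = trLF z.
Proof. by rewrite /trLF galTrace_gal ?memvf // galE mem_cycle. Qed.

Lemma tr_nz : exists w, tr w != 0.
Proof.
have [w _ Hw] := @gal_independent_contra _ _ fullv (mem 'Gal({:L} / 1)%g) (fun=> 1) 1%g (group1 _) (oner_neq0 _).
by exists w; move: Hw; rewrite /trLF /galTrace; congr (_ != 0); apply: eq_bigr => g _; rewrite mul1r.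
Qed.

Definition M a b x := s b x + s (n * b - b) x - s a x - s (n * a - a) x.

Lemma s_back m y : (0 < m)%N -> s (n * m - m) (s m y) = y.
Proof.
move=> m0; rewrite -sM subnKC; last by rewrite leq_pmull ?n_gt0.
apply/KfP; apply: Kf_mul; apply/KfP; exact: s_n.
Qed.

Lemma Bform a b x y : (0 < a)%N -> (0 < b)%N ->
  Qf #|F| a b (x + y) - Qf #|F| a b x - Qf #|F| a b y = tr (M a b x * y).
Proof.
move=> a0 b0.
have pw : forall m z, z ^+ (#|F| ^ m + 1) = s m z * z by move=> m z; rewrite exprD expr1 sE.
rewrite /Qform !pw !rmorphD /= -!raddfB /=.
have t : forall m, (0 < m)%N -> tr (s m y * x) = tr (s (n * m - m) x * y).
  by move=> m m0; rewrite -(tr_s (n * m - m)) rmorphM /= s_back // mulrC.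
have -> : (s b x + s b y) * (x + y) - (s a x + s a y) * (x + y) - (s b x * x - s a x * x) -
     (s b y * y - s a y * y) = (s b x * y - s a x * y) + (s b y * x - s a y * x) by ring.
rewrite /trLF in t *; rewrite raddfD /= !raddfB /= (t b) // (t a) //.
rewrite /M; rewrite !mulrBl !mulrDl !raddfB !raddfD /=.
ring.
Qed.


Lemma rad a b x : (0 < a)%N -> (0 < b)%N ->
  (forall y, Qf #|F| a b (x + y) - Qf #|F| a b x - Qf #|F| a b y = 0) <-> M a b x = 0.
Proof.
move=> a0 b0; split => [H|H y]; last by rewrite Bform // H mul0r /trLF raddf0.
apply/eqP/negPn/negP => nz.
have [w nw] := tr_nz.
have := H ((M a b x)^-1 * w); rewrite Bform // mulrA mulfV // mul1r.
by move/eqP; rewrite (negbTE nw).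
Qed.

Lemma M_comp a b x : (a < b)%N ->
  (M a b x == 0) = ((Aop (b + a) \o Aop (b - a))%VF x == 0).
Proof.
move=> ab.
have a0 : (0 < b)%N by apply: leq_ltn_trans ab.
rewrite -(fmorph_eq0 (s b)) comp_lfunE !AopE /M !rmorphB !rmorphD /=.
rewrite -!sM addnn.
have -> : (n * b - b + b = n * b)%N by rewrite subnK // leq_pmull ?n_gt0.
have -> : (n * a - a + b = (b - a) + n * a)%N.
  have : (a <= n * a)%N by rewrite leq_pmull ?n_gt0.
  lia.
have fx : forall m z, s (n * m) z = z by move=> m z; apply/KfP; apply: Kf_mul; apply/KfP; exact: s_n.
rewrite (sM (b - a) (n * a)) !fx (addnC a b).
have -> : (b - a + (b + a) = b.*2)%N by lia.
apply/eqP/eqP => H; rewrite -H; ring.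
Qed.


Lemma main_lt a b : (0 < a)%N -> (a < b)%N ->
  exists V : {vspace L},
    (forall x : L, x \in V <->
       (forall y : L, Qf #|F| a b (x + y) - Qf #|F| a b x - Qf #|F| a b y = 0)) /\
    \dim V =
      (if (logn p n <= maxn (logn p (b + a)) (logn p (absdiff b a)))%N
       then gcdn (b + a) n + gcdn (absdiff b a) n
              - gcdn (gcdn (b + a) (absdiff b a)) n
       else gcdn (b + a) n + gcdn (absdiff b a) n)%N.
Proof.
move=> a0 ab; have b0 : (0 < b)%N by apply: leq_ltn_trans ab.
have ad : absdiff b a = (b - a)%N by rewrite /absdiff; lia.
exists (lker (Aop (b + a) \o Aop (b - a))%VF); split.
  move=> x; rewrite rad // memv_ker -M_comp //; split; first by move/eqP.
  by move=> ->.
rewrite ad dim_main ?addn_gt0 ?a0 ?orbT // pK_cond ?addn_gt0 ?a0 ?orbT ?subn_gt0 //.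
by set c := (logn p _ <= _)%N; case: c; rewrite /= ?subn0.
Qed.

End Gal.

Theorem mainTheorem5 (p k q : nat) (F : finFieldType) (L : splittingFieldType F)
    (a b n : nat) :
  prime p -> odd p -> q = (p ^ k)%N -> #|F| = q ->
  (0 < a)%N -> (0 < b)%N -> a != b -> (0 < n)%N ->
  \dim {:L} = n ->
  exists V : {vspace L},
    (forall x : L, x \in V <->
       (forall y : L, Qform q a b (x + y) - Qform q a b x - Qform q a b y = 0)) /\
    \dim V =
      (if (logn p n <= maxn (logn p (b + a)) (logn p (absdiff b a)))%N
       then gcdn (b + a) n + gcdn (absdiff b a) n
              - gcdn (gcdn (b + a) (absdiff b a)) n
       else gcdn (b + a) n + gcdn (absdiff b a) n)%N.
Proof.
move=> pp _ qE FE a0 b0 ab n0 nE.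
have charF : p \in [pchar F] by apply: (card_finPcharP (n := k)) => //; rewrite FE qE.
have charL : p \in [pchar L] by rewrite (pchar_lalg L).
have [alpha gen alphaE] := galLgen (L := L) 1%AS.
rewrite dimv1 expn1 in alphaE.
subst q n; rewrite -FE.
case: (ltngtP a b) => [lt|lt|e]; last by rewrite e eqxx in ab.
  exact: (main_lt gen charL alphaE a0 lt).
have [V [HV dV]] := main_lt gen charL alphaE b0 lt.
exists V; split.
  move=> x; rewrite HV.
  have e : forall z : L, Qform #|F| b a z = - Qform #|F| a b z.
    by move=> z; rewrite /Qform /trLF -raddfN opprB.
  by split => H y; move: (H y); rewrite ?e => h; rewrite -oppr0 -h; ring.
rewrite dV.
have -> : absdiff a b = absdiff b a by rewrite /absdiff addnC.
by rewrite (addnC a b).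
Qed.
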